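(* Let $(\mathcal{S},\mathcal{R})$ be an $r$-homogeneous positive presentation. Then $(\mathcal{S},\mathcal{R})$ is $r$-complete if and only if any one of the following three conditions holds, and these three conditions are equivalent: (i) the strong $r$-cube condition holds at $u,v,w$ for all $u,v,w\in\mathcal{S}^*$; (ii) the strong $r$-cube condition holds at $s,t,r$ for all letters $s,t,r\in\mathcal{S}$; (iii) the $r$-cube condition holds at $s,t,r$ for all letters $s,t,r\in\mathcal{S}$.
   Context: A positive presentation is a pair $(\mathcal{S},\mathcal{R})$ where $\mathcal{S}$ is a nonempty set of letters and $\mathcal{R}$ is a family of relations $u=v$, i.e. unordered pairs $\{u,v\}$ of nonempty words in the free monoid $\mathcal{S}^*$. $\varepsilon$ denotes the empty word; $\equiv$ is the smallest congruence on $\mathcal{S}^*$ containing all pairs of $\mathcal{R}$. Let $\mathcal{S}^{-1}=\{s^{-1}:s\in\mathcal{S}\}$ be a disjoint copy of $\mathcal{S}$; for a word $u\in\mathcal{S}^*$, $u^{-1}$ is the word on $\mathcal{S}^{-1}$ obtained by reversing the order of the letters of $u$ and replacing each $s$ by $s^{-1}$. Right reversing: for words $\mathbf{w},\mathbf{w}'$ on $\mathcal{S}\cup\mathcal{S}^{-1}$ we write $\mathbf{w}\curvearrowright_r\mathbf{w}'$ if $\mathbf{w}'$ is obtained from $\mathbf{w}$ by a finite (possibly empty) sequence of steps, each of which either deletes a subword $u^{-1}u$ with $u\in\mathcal{S}^*$ nonempty, or replaces a subword $u^{-1}v$ with $u,v\in\mathcal{S}^*$ nonempty by a word $v'u'^{-1}$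 with $u',v'\in\mathcal{S}^*$ such that $uv'=vu'$ is a relation of $\mathcal{R}$. $(\mathcal{S},\mathcal{R})$ is $r$-complete if for all $u,v,u',v'\in\mathcal{S}^*$ with $uv'\equiv vu'$ there exist $u'',v'',w\in\mathcal{S}^*$ with $u^{-1}v\curvearrowright_r v''u''^{-1}$, $u'\equiv u''w$ and $v'\equiv v''w$. For $u,v,w\in\mathcal{S}^*$: the $r$-cube condition holds at $u,v,w$ if whenever $u^{-1}ww^{-1}v\curvearrowright_r v'u'^{-1}$ with $u',v'\in\mathcal{S}^*$, there exist $u'',v'',w''\in\mathcal{S}^*$ with $u^{-1}v\curvearrowright_r v''u''^{-1}$, $u'\equiv u''w''$ and $v'\equiv v''w''$; the strong $r$-cube condition holds at $u,v,w$ if whenever $u^{-1}ww^{-1}v\curvearrowright_r v'u'^{-1}$ with $u',v'\in\mathcal{S}^*$, we have $(uv')^{-1}(vu')\curvearrowright_r\varepsilon$. $(\mathcal{S},\mathcal{R})$ is $r$-homogeneous if there is a map $\lambda$ from $\mathcal{S}^*$ to the ordinals such that $\lambda(su)>\lambda(u)$ for all $s\in\mathcal{S}$, $u\in\mathcal{S}^*$, and $\lambda(u)=\lambda(v)$ whenever $u\equiv v$. *)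

(* Defs.v *)
From Stdlib Require Import List.
Import ListNotations.
Set Implicit Arguments.

Section Pres.
Variable S : Type.

(* A relation family R is a predicate on pairs of words; the pair {u,v}
   is a relation of R iff  R u v \/ R v u  (unordered pairs). *)
Definition is_rel (R : list S -> list S -> Prop) (u v : list S) : Prop :=
  R u v \/ R v u.

Definition positive_presentation (R : list S -> list S -> Prop) : Prop :=
  forall u v, R u v -> u <> [] /\ v <> [].

Inductive cong (R : list S -> list S -> Prop) : list S -> list S -> Prop :=
| cong_rel : forall a b u v, R u v -> cong R (a ++ u ++ b) (a ++ v ++ b)
| cong_refl : forall u, cong R u u
| cong_sym : forall u v, cong R u v -> cong R v u
| cong_trans : forall u v w, cong R u v -> cong R v w -> cong R u w.

(* Signed letters: words on S ∪ S^{-1}. *)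
Inductive sletter : Type := Pos (s : S) | Neg (s : S).

Definition pos (u : list S) : list sletter := map Pos u.
Definition inv (u : list S) : list sletter := rev (map Neg u).

Inductive rev_step (R : list S -> list S -> Prop) : list sletter -> list sletter -> Prop :=
| rev_del : forall a b u, u <> [] ->
    rev_step R (a ++ inv u ++ pos u ++ b) (a ++ b)
| rev_rel : forall a b u v u' v', u <> [] -> v <> [] ->
    is_rel R (u ++ v') (v ++ u') ->
    rev_step R (a ++ inv u ++ pos v ++ b) (a ++ pos v' ++ inv u' ++ b).

Inductive rev_star (R : list S -> list S -> Prop) : list sletter -> list sletter -> Prop :=
| rev_refl : forall w, rev_star R w w
| rev_cons : forall w1 w2 w3, rev_step R w1 w2 -> rev_star R w2 w3 -> rev_star R w1 w3.

Definition r_complete (R : list S -> list S -> Prop) : Prop :=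
  forall u v u' v', cong R (u ++ v') (v ++ u') ->
    exists u'' v'' w, rev_star R (inv u ++ pos v) (pos v'' ++ inv u'') /\
      cong R u' (u'' ++ w) /\ cong R v' (v'' ++ w).

Definition r_cube (R : list S -> list S -> Prop) (u v w : list S) : Prop :=
  forall u' v', rev_star R (inv u ++ pos w ++ inv w ++ pos v) (pos v' ++ inv u') ->
    exists u'' v'' w'', rev_star R (inv u ++ pos v) (pos v'' ++ inv u'') /\
      cong R u' (u'' ++ w'') /\ cong R v' (v'' ++ w'').

Definition strong_r_cube (R : list S -> list S -> Prop) (u v w : list S) : Prop :=
  forall u' v', rev_star R (inv u ++ pos w ++ inv w ++ pos v) (pos v' ++ inv u') ->
    rev_star R (inv (u ++ v') ++ pos (v ++ u')) [].

(* r-homogeneous: a map lambda into the ordinals, i.e. into a well-ordered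
   type (strict, total, well-founded order), with lambda(su) > lambda(u) and
   lambda constant on ≡-classes. *)
Definition r_homogeneous (R : list S -> list S -> Prop) : Prop :=
  exists (O : Type) (lt : O -> O -> Prop) (lambda : list S -> O),
    (forall x y z, lt x y -> lt y z -> lt x z) /\
    (forall x y, lt x y \/ x = y \/ lt y x) /\
    well_founded lt /\
    (forall s u, lt (lambda u) (lambda (s :: u))) /\
    (forall u v, cong R u v -> lambda u = lambda v).

End Pres.

(* Main.v *)
Require Import Defs.
From Stdlib Require Import List.
Import ListNotations.

Ltac ls := repeat (rewrite <- app_assoc || rewrite app_nil_l || rewrite app_nil_r).

Inductive Rv {S : Type} (R : list S -> list S -> Prop) : list S -> list S -> list S -> list S -> Prop :=
| Rv_nilL : forall v, Rv R [] v v []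
| Rv_nilR : forall u, Rv R u [] [] u
| Rv_del : forall u, Rv R u u [] []
| Rv_rel : forall u v v' u', u <> [] -> v <> [] -> is_rel R (u ++ v') (v ++ u') -> Rv R u v v' u'
| Rv_compL : forall u1 u2 v v1 v' u1' u2', Rv R u1 v v1 u1' -> Rv R u2 v1 v' u2' ->
    Rv R (u1 ++ u2) v v' (u1' ++ u2')
| Rv_compR : forall u v1 v2 v1' v2' m u', Rv R u v1 v1' m -> Rv R m v2 v2' u' ->
    Rv R u (v1 ++ v2) (v1' ++ v2') u'.

Lemma compL' {S} {R : list S -> list S -> Prop} u1 u2 v v1 v' u1' u2' U U' :
  Rv R u1 v v1 u1' -> Rv R u2 v1 v' u2' -> U = u1 ++ u2 -> U' = u1' ++ u2' -> Rv R U v v' U'.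
Proof. intros; subst; eapply Rv_compL; eauto. Qed.

Lemma compR' {S} {R : list S -> list S -> Prop} u v1 v2 v1' v2' m u' V V' :
  Rv R u v1 v1' m -> Rv R m v2 v2' u' -> V = v1 ++ v2 -> V' = v1' ++ v2' -> Rv R u V V' u'.
Proof. intros; subst; eapply Rv_compR; eauto. Qed.

Lemma Rv_sym {S} {R : list S -> list S -> Prop} {u v v' u'} : Rv R u v v' u' -> Rv R v u u' v'.
Proof.
  induction 1.
  - apply Rv_nilR.
  - apply Rv_nilL.
  - apply Rv_del.
  - apply Rv_rel; auto. unfold is_rel in *; tauto.
  - eapply Rv_compR; eauto.
  - eapply Rv_compL; eauto.
Qed.

Lemma Rv_nilL_inv {S} {R : list S -> list S -> Prop} {u v v' u'} :
  Rv R u v v' u' -> u = [] -> v' = v /\ u' = [].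
Proof.
  induction 1; intro Hu.
  - auto.
  - subst; auto.
  - subst; auto.
  - contradiction.
  - destruct (app_eq_nil _ _ Hu) as [H1 H2].
    destruct (IHRv1 H1) as [-> ->]. destruct (IHRv2 H2) as [-> ->]. auto.
  - destruct (IHRv1 Hu) as [-> ->]. destruct (IHRv2 eq_refl) as [-> ->]. auto.
Qed.

Lemma Rv_nilR_inv {S} {R : list S -> list S -> Prop} {u v v' u'} :
  Rv R u v v' u' -> v = [] -> v' = [] /\ u' = u.
Proof.
  intros H Hv. apply Rv_sym in H. destruct (Rv_nilL_inv H Hv). auto.
Qed.

Lemma splitL {S} {R : list S -> list S -> Prop} {U v v' u'} :
  Rv R U v v' u' -> forall u1 u2, U = u1 ++ u2 ->
  exists v1 a b, Rv R u1 v v1 a /\ Rv R u2 v1 v' b /\ u' = a ++ b.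
Proof.
  induction 1; intros U1 U2 HU.
  - symmetry in HU; destruct (app_eq_nil _ _ HU); subst.
    exists v, [], []. repeat split; apply Rv_nilL.
  - exists [], U1, U2. repeat split; auto; apply Rv_nilR.
  - subst. exists U2, [], []. repeat split.
    + eapply compR'. apply Rv_del. apply Rv_nilL. reflexivity. reflexivity.
    + apply Rv_del.
  - destruct U1 as [|x U1'].
    + simpl in HU; subst. exists v, [], u'. repeat split. apply Rv_nilL. apply Rv_rel; auto.
    + exists (U2 ++ v'), u', []. repeat split.
      * apply Rv_rel; auto. discriminate. subst. rewrite app_assoc. auto.
      * eapply compR'. apply Rv_del. apply Rv_nilL. reflexivity. reflexivity.
      * rewrite app_nil_r; auto.
  - destruct (app_eq_app _ _ _ _ HU) as [l [[E1 E2]|[E1 E2]]].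
    + destruct (IHRv1 _ _ E1) as [c [a [b [Ha [Hb Hab]]]]].
      exists c, a, (b ++ u2'). repeat split; auto.
      * eapply compL'; eauto.
      * subst. ls. reflexivity.
    + destruct (IHRv2 _ _ E2) as [c [a [b [Ha [Hb Hab]]]]].
      exists c, (u1' ++ a), b. repeat split; auto.
      * eapply compL'; eauto.
      * subst. ls. reflexivity.
  - destruct (IHRv1 _ _ HU) as [c [p [q [Hp [Hq Hpq]]]]].
    destruct (IHRv2 _ _ Hpq) as [d [p' [q' [Hp' [Hq' Hpq']]]]].
    exists (c ++ d), p', q'. repeat split; auto.
    + eapply Rv_compR; eauto.
    + eapply Rv_compR; eauto.
Qed.

Lemma splitR {S} {R : list S -> list S -> Prop} {u v1 v2 v' u'} :
  Rv R u (v1 ++ v2) v' u' ->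
  exists w a b, Rv R u v1 a w /\ Rv R w v2 b u' /\ v' = a ++ b.
Proof.
  intro H. apply Rv_sym in H.
  destruct (splitL H v1 v2 eq_refl) as [c [a [b [Ha [Hb Hab]]]]].
  exists c, a, b. repeat split; auto; apply Rv_sym; auto.
Qed.

Definition E {S} (R : list S -> list S -> Prop) x y := Rv R x y [] [].

Lemma decomp {S} {R : list S -> list S -> Prop} {u u2 v v2} :
  E R (u ++ u2) (v ++ v2) ->
  exists a b w, Rv R u v a b /\ E R u2 (a ++ w) /\ E R (b ++ w) v2.
Proof.
  unfold E; intro H.
  destruct (splitL H u u2 eq_refl) as [c [q [r [Hq [Hr Hqr]]]]].
  symmetry in Hqr; destruct (app_eq_nil _ _ Hqr); subst.
  destruct (splitR Hq) as [b [a [w [H1 [H2 H3]]]]]. subst.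
  exists a, b, w. repeat split; auto.
  eapply compL'. exact H2. apply Rv_del. reflexivity. reflexivity.
Qed.

Inductive G {S : Type} (R : list S -> list S -> Prop) : list (sletter S) -> list S -> list S -> Prop :=
| G_nil : G R [] [] []
| G_pos : forall s W v u, G R W v u -> G R (Pos s :: W) (s :: v) u
| G_neg : forall s W v1 u1 v' u2, G R W v1 u1 -> Rv R [s] v1 v' u2 -> G R (Neg s :: W) v' (u1 ++ u2).

Lemma Gapp {S} {R : list S -> list S -> Prop} A B v' u' :
  G R (A ++ B) v' u' <-> exists v1 u1 v2 u2 v3 u3, G R B v1 u1 /\ G R A v2 u2 /\
    Rv R u2 v1 v3 u3 /\ v' = v2 ++ v3 /\ u' = u1 ++ u3.
Proof.
  revert v' u'; induction A as [|[s|s] A IH]; intros v' u'; split.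
  - intro H. exists v', u', [], [], v', []. repeat split; auto. apply G_nil. apply Rv_nilL.
    rewrite app_nil_r; auto.
  - intros [v1 [u1 [v2 [u2 [v3 [u3 [H1 [H2 [H3 [-> ->]]]]]]]]]].
    inversion H2; subst. destruct (Rv_nilL_inv H3 eq_refl) as [-> ->].
    rewrite app_nil_r; exact H1.
  - intro H. inversion H; subst. apply IH in H4.
    destruct H4 as [v1 [u1 [v2 [u2 [v3 [u3 [H1 [H2 [H3 [-> ->]]]]]]]]]].
    exists v1, u1, (s :: v2), u2, v3, u3. repeat split; auto. apply G_pos; auto.
  - intros [v1 [u1 [v2 [u2 [v3 [u3 [H1 [H2 [H3 [-> ->]]]]]]]]]].
    inversion H2; subst. simpl. apply G_pos. apply IH.
    exists v1, u1, v, u2, v3, u3. repeat split; auto.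
  - intro H. inversion H as [| |s0 W w1 x1 v'' x2 HW Hr]; subst. apply IH in HW.
    destruct HW as [v1 [u1 [v2 [u2 [v3 [u3 [H1 [H2 [H3 [-> ->]]]]]]]]]].
    destruct (splitR Hr) as [m [a [b [Ha [Hb ->]]]]].
    exists v1, u1, a, (u2 ++ m), b, (u3 ++ x2).
    repeat split; auto.
    + apply G_neg with (v1 := v2); auto.
    + eapply Rv_compL; eauto.
    + ls; reflexivity.
  - intros [v1 [u1 [v2 [u2 [v3 [u3 [H1 [H2 [H3 [-> ->]]]]]]]]]].
    inversion H2 as [| |s0 W a1 b1 v'' b2 HW Hr]; subst.
    destruct (splitL H3 b1 b2 eq_refl) as [c [d [e [Hd [He ->]]]]].
    replace (u1 ++ d ++ e) with ((u1 ++ d) ++ e) by (ls; reflexivity).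
    simpl. apply G_neg with (v1 := a1 ++ c).
    + apply IH. exists v1, u1, a1, b1, c, d. repeat split; auto.
    + eapply Rv_compR; eauto.
Qed.

Lemma Gpos_ex {S} {R : list S -> list S -> Prop} v : G R (pos v) v [].
Proof. induction v; simpl. apply G_nil. apply G_pos; auto. Qed.

Lemma Gpos_inv {S} {R : list S -> list S -> Prop} v a b : G R (pos v) a b -> a = v /\ b = [].
Proof.
  revert a b; induction v; intros a' b' H; simpl in H; inversion H; subst; auto.
  destruct (IHv _ _ H4); subst; auto.
Qed.

Lemma inv_cons {S} (s : S) u : inv (s :: u) = inv u ++ [Neg s].
Proof. reflexivity. Qed.

Lemma inv_app {S} (u v : list S) : inv (u ++ v) = inv v ++ inv u.
Proof. unfold inv. rewrite map_app, rev_app_distr. reflexivity. Qed.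

Lemma pos_app {S} (u v : list S) : pos (u ++ v) = pos u ++ pos v.
Proof. unfold pos. apply map_app. Qed.

Lemma inv_nil {S} : inv (@nil S) = [].
Proof. reflexivity. Qed.
Lemma pos_nil {S} : pos (@nil S) = [].
Proof. reflexivity. Qed.

Lemma Ginv_ex {S} {R : list S -> list S -> Prop} u : G R (inv u) [] u.
Proof.
  induction u as [|s u IH]. apply G_nil.
  rewrite inv_cons. apply Gapp. exists [], [s], [], u, [], u. repeat split; auto.
  - change [s] with ([] ++ [s]). apply G_neg with (v1 := []). apply G_nil. apply Rv_nilR.
  - apply Rv_nilR.
Qed.

Lemma Ginv_inv {S} {R : list S -> list S -> Prop} u a b : G R (inv u) a b -> a = [] /\ b = u.
Proof.
  revert a b; induction u as [|s u IH]; intros a b H.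
  - inversion H; auto.
  - rewrite inv_cons in H. apply Gapp in H.
    destruct H as [v1 [u1 [v2 [u2 [v3 [u3 [H1 [H2 [H3 [-> ->]]]]]]]]]].
    inversion H1 as [| |s0 W a1 b1 v'' b2 HW Hr]; subst. inversion HW; subst.
    destruct (Rv_nilR_inv Hr eq_refl) as [-> ->].
    destruct (IH _ _ H2) as [-> ->].
    destruct (Rv_nilR_inv H3 eq_refl) as [-> ->]. auto.
Qed.

Lemma G_pn {S} {R : list S -> list S -> Prop} v u : G R (pos v ++ inv u) v u.
Proof.
  apply Gapp. exists [], u, v, [], [], []. repeat split; auto.
  apply Ginv_ex. apply Gpos_ex. apply Rv_nilL. rewrite app_nil_r; auto. rewrite app_nil_r; auto.
Qed.

Lemma G_pn_inv {S} {R : list S -> list S -> Prop} v u a b : G R (pos v ++ inv u) a b -> a = v /\ b = u.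
Proof.
  intro H; apply Gapp in H.
  destruct H as [v1 [u1 [v2 [u2 [v3 [u3 [H1 [H2 [H3 [-> ->]]]]]]]]]].
  destruct (Ginv_inv _ _ _ H1) as [-> ->]. destruct (Gpos_inv _ _ _ H2) as [-> ->].
  destruct (Rv_nilL_inv H3 eq_refl) as [-> ->]. rewrite !app_nil_r; auto.
Qed.

Lemma G_np {S} {R : list S -> list S -> Prop} u v a b : G R (inv u ++ pos v) a b <-> Rv R u v a b.
Proof.
  split; intro H.
  - apply Gapp in H.
    destruct H as [v1 [u1 [v2 [u2 [v3 [u3 [H1 [H2 [H3 [-> ->]]]]]]]]]].
    destruct (Gpos_inv _ _ _ H1) as [-> ->]. destruct (Ginv_inv _ _ _ H2) as [-> ->].
    exact H3.
  - apply Gapp. exists v, [], [], u, a, b. repeat split; auto. apply Gpos_ex. apply Ginv_ex.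
Qed.

Lemma G_subst {S} {R : list S -> list S -> Prop} M M' a b p q :
  (forall p q, G R M' p q -> G R M p q) -> G R (a ++ M' ++ b) p q -> G R (a ++ M ++ b) p q.
Proof.
  intros HM H. apply Gapp in H.
  destruct H as [v1 [u1 [v2 [u2 [v3 [u3 [H1 [H2 [H3 [-> ->]]]]]]]]]].
  apply Gapp in H1.
  destruct H1 as [w1 [x1 [w2 [x2 [w3 [x3 [K1 [K2 [K3 [-> ->]]]]]]]]]].
  apply Gapp. exists (w2 ++ w3), (x1 ++ x3), v2, u2, v3, u3. repeat split; auto.
  apply Gapp. exists w1, x1, w2, x2, w3, x3. repeat split; auto.
Qed.

Lemma step_G {S} {R : list S -> list S -> Prop} W W' :
  rev_step R W W' -> forall p q, G R W' p q -> G R W p q.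
Proof.
  destruct 1 as [a b u Hu | a b u v u' v' Hu Hv Hr]; intros p q H.
  - rewrite (app_assoc (inv u)). change (a ++ b) with (a ++ [] ++ b) in H.
    revert H. apply G_subst. intros p' q' H'. inversion H'; subst.
    apply G_np. apply Rv_del.
  - rewrite (app_assoc (inv u)). rewrite (app_assoc (pos v')) in H.
    revert H. apply G_subst. intros p' q' H'.
    destruct (G_pn_inv _ _ _ _ H') as [-> ->].
    apply G_np. apply Rv_rel; auto.
Qed.

Lemma rs_G {S} {R : list S -> list S -> Prop} W W' :
  rev_star R W W' -> forall p q, G R W' p q -> G R W p q.
Proof.
  induction 1; auto. intros p q H'. eapply step_G; eauto.
Qed.

Lemma rs2Rv {S} {R : list S -> list S -> Prop} u v v' u' :
  rev_star R (inv u ++ pos v) (pos v' ++ inv u') -> Rv R u v v' u'.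
Proof.
  intro H. apply G_np. eapply rs_G; eauto. apply G_pn.
Qed.

Lemma rs4_elim {S} {R : list S -> list S -> Prop} u v w v' u' :
  rev_star R (inv u ++ pos w ++ inv w ++ pos v) (pos v' ++ inv u') ->
  exists v1 w1 w2 u2 v3 u3, Rv R w v v1 w1 /\ Rv R u w w2 u2 /\ Rv R u2 v1 v3 u3 /\
    v' = w2 ++ v3 /\ u' = w1 ++ u3.
Proof.
  intro H. assert (HG := rs_G _ _ H _ _ (G_pn v' u')).
  rewrite (app_assoc (inv u)) in HG. apply Gapp in HG.
  destruct HG as [v1 [u1 [v2 [u2 [v3 [u3 [H1 [H2 [H3 [-> ->]]]]]]]]]].
  apply G_np in H1. apply G_np in H2.
  exists v1, u1, v2, u2, v3, u3. repeat split; auto.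
Qed.

Lemma rs_trans {S} {R : list S -> list S -> Prop} W1 W2 W3 :
  rev_star R W1 W2 -> rev_star R W2 W3 -> rev_star R W1 W3.
Proof. induction 1; auto. intro; econstructor; eauto. Qed.

Lemma step_ctx {S} {R : list S -> list S -> Prop} W W' a b :
  rev_step R W W' -> rev_step R (a ++ W ++ b) (a ++ W' ++ b).
Proof.
  destruct 1 as [a0 b0 u Hu | a0 b0 u v u' v' Hu Hv Hr].
  - pose proof (@rev_del S R (a ++ a0) (b0 ++ b) u Hu) as H. ls. repeat (rewrite <- app_assoc in H). exact H.
  - pose proof (@rev_rel S R (a ++ a0) (b0 ++ b) u v u' v' Hu Hv Hr) as H. ls. repeat (rewrite <- app_assoc in H). exact H.
Qed.

Lemma rs_ctx {S} {R : list S -> list S -> Prop} W W' a b X Y :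
  rev_star R W W' -> X = a ++ W ++ b -> Y = a ++ W' ++ b -> rev_star R X Y.
Proof.
  intros H; revert X Y; induction H; intros X Y -> ->.
  - constructor.
  - econstructor. apply step_ctx; eauto. eauto.
Qed.

Lemma Rv2rs {S} {R : list S -> list S -> Prop} u v v' u' :
  Rv R u v v' u' -> rev_star R (inv u ++ pos v) (pos v' ++ inv u').
Proof.
  induction 1.
  - rewrite inv_nil, app_nil_l, app_nil_r. constructor.
  - rewrite pos_nil, app_nil_l, app_nil_r. constructor.
  - destruct u as [|s u]. constructor.
    econstructor. 2: constructor.
    pose proof (@rev_del S R [] [] (s :: u) ltac:(discriminate)) as H.
    rewrite !app_nil_l, app_nil_r in H. exact H.
  - econstructor. 2: constructor.
    pose proof (@rev_rel S R [] [] u v u' v' H H0 H1) as H2.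
    rewrite !app_nil_l, !app_nil_r in H2. exact H2.
  - rewrite !inv_app. eapply rs_trans.
    + eapply rs_ctx with (a := inv u2) (b := []). exact IHRv1. ls; reflexivity. reflexivity.
    + eapply rs_ctx with (a := []) (b := inv u1'). exact IHRv2. ls; reflexivity. ls; reflexivity.
  - rewrite !pos_app. eapply rs_trans.
    + eapply rs_ctx with (a := []) (b := pos v2). exact IHRv1. ls; reflexivity. reflexivity.
    + eapply rs_ctx with (a := pos v1') (b := []). exact IHRv2. ls; reflexivity. ls; reflexivity.
Qed.

Lemma rs4_intro {S} {R : list S -> list S -> Prop} u v w v1 w1 w2 u2 v3 u3 :
  Rv R w v v1 w1 -> Rv R u w w2 u2 -> Rv R u2 v1 v3 u3 ->
  rev_star R (inv u ++ pos w ++ inv w ++ pos v) (pos (w2 ++ v3) ++ inv (w1 ++ u3)).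
Proof.
  intros H1 H2 H3. apply Rv2rs in H1, H2, H3.
  eapply rs_trans; [| eapply rs_trans].
  - eapply rs_ctx with (a := inv u ++ pos w) (b := []). exact H1. ls; reflexivity. reflexivity.
  - eapply rs_ctx with (a := []) (b := pos v1 ++ inv w1). exact H2. ls; reflexivity. reflexivity.
  - eapply rs_ctx with (a := pos w2) (b := inv w1). exact H3. ls; reflexivity.
    rewrite pos_app, inv_app. ls; reflexivity.
Qed.

Lemma cong_ctx {S} {R : list S -> list S -> Prop} x y a b :
  cong R x y -> cong R (a ++ x ++ b) (a ++ y ++ b).
Proof.
  induction 1.
  - pose proof (cong_rel R (a ++ a0) (b0 ++ b) u v H) as H'.
    repeat (rewrite <- app_assoc in H'). ls. exact H'.
  - apply cong_refl.
  - apply cong_sym; auto.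
  - eapply cong_trans; eauto.
Qed.

Lemma cong_ctx' {S} {R : list S -> list S -> Prop} x y a b X Y :
  cong R x y -> X = a ++ x ++ b -> Y = a ++ y ++ b -> cong R X Y.
Proof. intros H -> ->; apply cong_ctx; auto. Qed.

Lemma F1 {S} {R : list S -> list S -> Prop} u v v' u' :
  Rv R u v v' u' -> cong R (u ++ v') (v ++ u').
Proof.
  induction 1.
  - rewrite app_nil_r. apply cong_refl.
  - rewrite app_nil_r. apply cong_refl.
  - apply cong_refl.
  - destruct H1 as [H1|H1].
    + eapply cong_ctx' with (a := []) (b := []). apply cong_rel with (a := []) (b := []) in H1.
      ls. repeat (rewrite <- app_assoc in H1 || rewrite app_nil_l in H1 || rewrite app_nil_r in H1). exact H1. ls; reflexivity. ls; reflexivity.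
    + apply cong_sym. apply cong_rel with (a := []) (b := []) in H1.
      rewrite !app_nil_l, !app_nil_r in H1. exact H1.
  - eapply cong_trans.
    + eapply cong_ctx' with (a := u1) (b := []). exact IHRv2. ls; reflexivity. reflexivity.
    + eapply cong_ctx' with (a := []) (b := u2'). exact IHRv1. ls; reflexivity. ls; reflexivity.
  - eapply cong_trans.
    + eapply cong_ctx' with (a := []) (b := v2'). exact IHRv1. ls; reflexivity. reflexivity.
    + eapply cong_ctx' with (a := v1) (b := []). exact IHRv2. ls; reflexivity. ls; reflexivity.
Qed.

Lemma cong_nil {S} {R : list S -> list S -> Prop} x y :
  positive_presentation R -> cong R x y -> (x = [] <-> y = []).
Proof.
  intros Hp; induction 1.
  - destruct (Hp _ _ H) as [Hu Hv]. split; intro E0.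
    + destruct (app_eq_nil _ _ E0) as [_ E1]. destruct (app_eq_nil _ _ E1). contradiction.
    + destruct (app_eq_nil _ _ E0) as [_ E1]. destruct (app_eq_nil _ _ E1). contradiction.
  - tauto.
  - tauto.
  - tauto.
Qed.

Lemma E_cong {S} {R : list S -> list S -> Prop} x y : E R x y -> cong R x y.
Proof. intro H. apply F1 in H. rewrite !app_nil_r in H. exact H. Qed.

Lemma E_refl {S} {R : list S -> list S -> Prop} x : E R x x.
Proof. apply Rv_del. Qed.

Lemma E_sym {S} {R : list S -> list S -> Prop} x y : E R x y -> E R y x.
Proof. apply Rv_sym. Qed.

Lemma E_ctx {S} {R : list S -> list S -> Prop} x y a b : E R x y -> E R (a ++ x ++ b) (a ++ y ++ b).
Proof.
  intro H. unfold E.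
  assert (Hl : forall a x y, E R x y -> E R (a ++ x) (a ++ y)).
  { clear. intros a x y H. unfold E. eapply compR' with (v1 := a) (v2 := y).
    - eapply compL'. apply Rv_del. apply Rv_nilR. reflexivity. reflexivity.
    - exact H.
    - reflexivity.
    - reflexivity. }
  apply Hl. eapply compL' with (u1 := x) (u2 := b).
  - eapply compR' with (v1 := y) (v2 := b). exact H. apply Rv_nilL. reflexivity. reflexivity.
  - apply Rv_del.
  - reflexivity.
  - reflexivity.
Qed.

Lemma E_rel {S} {R : list S -> list S -> Prop} u v :
  positive_presentation R -> R u v -> E R u v.
Proof.
  intros Hp H. destruct (Hp _ _ H). apply Rv_rel; auto. left. rewrite !app_nil_r; auto.
Qed.

Lemma E_nil {S} {R : list S -> list S -> Prop} x y :
  positive_presentation R -> E R x y -> (x = [] <-> y = []).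
Proof. intros Hp H. apply (cong_nil x y Hp), E_cong; auto. Qed.

Lemma E_trans_all {S} {R : list S -> list S -> Prop} :
  positive_presentation R -> r_homogeneous R -> (forall s t r : S, r_cube R [s] [t] [r]) ->
  forall x y z, E R x y -> E R y z -> E R x z.
Proof.
  intros Hpos Hhom Hcube.
  destruct Hhom as [O [lt [lam [_ [_ [Hwf [Hlt Hcg]]]]]]].
  assert (P : forall o x y z, lam x = o -> E R x y -> E R y z -> E R x z).
  { intro o. induction o as [o IH] using (well_founded_ind Hwf).
    intros x y z Hx Hxy Hyz.
    assert (Hle : forall a b, cong R a b -> lt (lam a) o -> E R a b).
    { intros a b Hab. induction Hab as [a0 b0 u v Huv| u | u v Huv IHuv | u v w H1 IH1 H2 IH2];
        intro Hl.
      - apply E_ctx, E_rel; auto.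
      - apply E_refl.
      - apply E_sym, IHuv. rewrite (Hcg _ _ Huv); auto.
      - eapply (IH (lam u)); eauto. apply IH2. rewrite <- (Hcg _ _ H1); auto. }
    destruct x as [|s x0].
    - assert (y = []) by (apply (E_nil _ _ Hpos Hxy); auto). subst.
      assert (z = []) by (apply (E_nil _ _ Hpos Hyz); auto). subst. apply E_refl.
    - destruct y as [|t y0].
      { exfalso. assert (s :: x0 = []) by (apply (E_nil _ _ Hpos Hxy); auto). discriminate. }
      destruct z as [|r z0].
      { exfalso. assert (t :: y0 = []) by (apply (E_nil _ _ Hpos Hyz); auto). discriminate. }
      assert (Ly : lam (t :: y0) = o) by (rewrite <- (Hcg _ _ (E_cong _ _ Hxy)); auto).
      assert (Lz : lam (r :: z0) = o) by (rewrite <- (Hcg _ _ (E_cong _ _ Hyz)); auto).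
      change (s :: x0) with ([s] ++ x0) in *.
      change (t :: y0) with ([t] ++ y0) in *.
      change (r :: z0) with ([r] ++ z0) in *.
      destruct (decomp Hxy) as [p1 [m [p2 [H1 [H2 H3]]]]].
      destruct (decomp Hyz) as [q1 [n [q2 [K1 [K2 K3]]]]].
      assert (Emq : E R (m ++ p2) (q1 ++ q2)).
      { apply Hle. eapply cong_trans. apply E_cong; exact H3. apply E_cong; exact K2.
        rewrite (Hcg _ _ (E_cong _ _ H3)). rewrite <- Ly. apply Hlt. }
      destruct (decomp Emq) as [v3 [u3 [k [L1 [L2 L3]]]]].
      destruct (Hcube s r t (n ++ u3) (p1 ++ v3) (rs4_intro _ _ _ _ _ _ _ _ _ K1 H1 L1))
        as [u'' [v'' [w'' [M1 [M2 M3]]]]].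
      apply rs2Rv in M1.
      assert (Ez : E R (u'' ++ w'' ++ k) z0).
      { apply Hle.
        - eapply cong_trans; [|eapply cong_trans].
          + eapply cong_ctx' with (a := []) (b := k). apply cong_sym; exact M2.
            ls; reflexivity. ls; reflexivity.
          + eapply cong_ctx' with (a := n) (b := []). apply E_cong; exact L3.
            ls; reflexivity. ls; reflexivity.
          + apply E_cong; exact K3.
        - rewrite <- Lz.
          assert (C2 : cong R (u'' ++ w'' ++ k) (n ++ q2)).
          { eapply cong_trans.
            + eapply cong_ctx' with (a := []) (b := k). apply cong_sym; exact M2.
              ls; reflexivity. ls; reflexivity.
            + eapply cong_ctx' with (a := n) (b := []). apply E_cong; exact L3.
              ls; reflexivity. ls; reflexivity. }
          rewrite (Hcg _ _ C2). rewrite (Hcg _ _ (E_cong _ _ K3)). apply Hlt. }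
      destruct (splitL Ez u'' (w'' ++ k) eq_refl) as [d [q [r' [N1 [N2 N3]]]]].
      symmetry in N3; destruct (app_eq_nil _ _ N3) as [-> ->].
      assert (Ex : E R x0 (v'' ++ d)).
      { apply Hle.
        - eapply cong_trans; [|eapply cong_trans; [|eapply cong_trans]].
          + apply E_cong; exact H2.
          + eapply cong_ctx' with (a := p1) (b := []). apply E_cong; exact L2.
            ls; reflexivity. ls; reflexivity.
          + eapply cong_ctx' with (a := []) (b := k). exact M3.
            ls; reflexivity. ls; reflexivity.
          + eapply cong_ctx' with (a := v'') (b := []). apply E_cong; exact N2.
            ls; reflexivity. ls; reflexivity.
        - rewrite <- Hx. apply Hlt. }
      eapply compL' with (u1 := [s]) (u2 := x0).
      + eapply compR' with (v1 := [r]) (v2 := z0). exact M1. exact N1. reflexivity. reflexivity.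
      + exact Ex.
      + reflexivity.
      + reflexivity. }
  intros; eapply P; eauto.
Qed.

Lemma complete_of_cube {S} {R : list S -> list S -> Prop} :
  positive_presentation R -> r_homogeneous R -> (forall s t r : S, r_cube R [s] [t] [r]) ->
  r_complete R.
Proof.
  intros Hpos Hhom Hcube u v u' v' H.
  assert (HE : forall x y, cong R x y -> E R x y).
  { intros x y Hxy. induction Hxy.
    - apply E_ctx, E_rel; auto.
    - apply E_refl.
    - apply E_sym; auto.
    - eapply (E_trans_all Hpos Hhom Hcube); eauto. }
  destruct (decomp (HE _ _ H)) as [a [b [w [H1 [H2 H3]]]]].
  exists b, a, w. split; [|split].
  - apply Rv2rs; auto.
  - apply cong_sym, E_cong; auto.
  - apply E_cong; auto.
Qed.

Lemma strong_of_complete {S} {R : list S -> list S -> Prop} :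
  positive_presentation R -> r_complete R -> forall u v w, strong_r_cube R u v w.
Proof.
  intros Hpos Hc u v w u' v' H.
  destruct (rs4_elim _ _ _ _ _ H) as [v1 [w1 [w2 [u2 [v3 [u3 [H1 [H2 [H3 [-> ->]]]]]]]]]].
  assert (C : cong R ((u ++ w2 ++ v3) ++ []) ((v ++ w1 ++ u3) ++ [])).
  { rewrite !app_nil_r.
    eapply cong_trans; [|eapply cong_trans].
    - eapply cong_ctx' with (a := []) (b := v3). apply F1; exact H2.
      ls; reflexivity. ls; reflexivity.
    - eapply cong_ctx' with (a := w) (b := []). apply F1; exact H3.
      ls; reflexivity. ls; reflexivity.
    - eapply cong_ctx' with (a := []) (b := u3). apply F1; exact H1.
      ls; reflexivity. ls; reflexivity. }
  destruct (Hc _ _ _ _ C) as [u'' [v'' [w'' [K1 [K2 K3]]]]].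
  assert (u'' = []).
  { apply cong_nil in K2; auto. destruct K2 as [K2 _].
    destruct (app_eq_nil _ _ (K2 eq_refl)); auto. }
  assert (v'' = []).
  { apply cong_nil in K3; auto. destruct K3 as [K3 _].
    destruct (app_eq_nil _ _ (K3 eq_refl)); auto. }
  subst. exact K1.
Qed.

Lemma cube_of_strong {S} {R : list S -> list S -> Prop} :
  (forall s t r : S, strong_r_cube R [s] [t] [r]) -> forall s t r : S, r_cube R [s] [t] [r].
Proof.
  intros Hs s t r u' v' H.
  pose proof (Hs s t r u' v' H) as K.
  assert (KE : E R ([s] ++ v') ([t] ++ u')).
  { apply rs2Rv. exact K. }
  destruct (decomp KE) as [a [b [w [H1 [H2 H3]]]]].
  exists b, a, w. split; [|split].
  - apply Rv2rs; auto.
  - apply cong_sym, E_cong; auto.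
  - apply E_cong; auto.
Qed.

Theorem proposition4p4 (S : Type) (R : list S -> list S -> Prop)
  (HS : inhabited S) (Hpos : positive_presentation R) (Hhom : r_homogeneous R) :
  (r_complete R <-> (forall u v w : list S, strong_r_cube R u v w)) /\
  ((forall u v w : list S, strong_r_cube R u v w) <->
     (forall s t r : S, strong_r_cube R [s] [t] [r])) /\
  ((forall s t r : S, strong_r_cube R [s] [t] [r]) <->
     (forall s t r : S, r_cube R [s] [t] [r])).
Proof.
  split; [split|split; split].
  - apply strong_of_complete; auto.
  - intro Ha. apply complete_of_cube; auto. apply cube_of_strong. intros; apply Ha.
  - intros Ha s t r. apply Ha.
  - intro Hl. apply strong_of_complete; auto. apply complete_of_cube; auto. apply cube_of_strong; auto.
  - apply cube_of_strong.
  - intros Hc s t r. apply strong_of_complete; auto. apply complete_of_cube; auto.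
Qed.
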